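(* In the setting where $A,B$ are strongly regular graphs with the same parameters, $A',B'$ are obtained by individualizing one port vertex each, $G=G(A',B')$ and $H=G(A',A')$: let $x\in V(G)$ lie in the part $C\in\{A,B\}$ of $G$ and $y\in V(H)$ lie in a part $D$ of $H$ (one of the two copies of $A$). Let $C'_x$ denote $C$ with its port vertex individualized and $x$ additionally individualized (with a different color), and similarly $D'_y$. If $\mathrm{WL}_1(C'_x)\ne\mathrm{WL}_1(D'_y)$, then $\mathrm{WL}_1(G_x)\ne\mathrm{WL}_1(H_y)$.
   Context: Graphs are finite, simple and undirected. A strongly regular graph with parameters $(n,d,\lambda,\mu)$ is an $n$-vertex $d$-regular graph in which any two adjacent vertices have $\lambda$ common neighbours and any two distinct non-adjacent vertices have $\mu$ common neighbours. $A'$ ($B'$) is $A$ ($B$) with a single port vertex $a_1$ ($b_1$) colored $1$ and others uncolored. $G(A',B')$ (uncolored) is the vertex-disjoint union of $A$ and $B$ plus a connecting vertex $c_1$ adjacent to $a_1$ and $b_1$ and a pendant vertex adjacent only to $c_1$; $H=G(A',A')$ uses two disjoint copies of $A'$. Color refinement on a vertex-colored $N$-vertex graph $X$: $C^0(x)$ is the color of $x$ (common default for uncolored vertices), $C^{r+1}(x)=\big(C^r(x),\{\!\{C^r(y)\}\!\}_{y\in N(x)}\big)$ ($\{\!\{\cdot\}\!\}$ = multiset), $\mathrm{WL}_1(X)=\{\!\{C^N(x)\}\!\}_{x}$. $G_x$ is $G$ with vertex $x$ given a special new color (the same special color for all choices of $x$). *)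

(* Defs.v *)
From mathcomp Require Import all_boot.
Set Implicit Arguments. Unset Strict Implicit. Unset Printing Implicit Defensive.

Definition simple_graph (V : finType) (e : rel V) : Prop :=
  symmetric e /\ irreflexive e.

Definition common_nbrs (V : finType) (e : rel V) (x y : V) : {set V} :=
  [set z | e x z && e y z].

Definition strongly_regular (V : finType) (e : rel V) (n d lam mu : nat) : Prop :=
  [/\ #|V| = n,
      forall x : V, #|[set y | e x y]| = d,
      forall x y : V, e x y -> #|common_nbrs e x y| = lam
    & forall x y : V, x != y -> ~~ e x y -> #|common_nbrs e x y| = mu].

(* A multiset of colours is
   represented canonically by the list of its elements sorted by their
   (injective) encoding [pickle]; two lists are equal after sorting iff
   they are equal as multisets. *)
Definition color := GenTree.tree nat.

Definition color_le (a b : color) : bool := pickle a <= pickle b.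

Definition mset_of (s : seq color) : seq color := sort color_le s.

(* C^{r+1}(x) = (C^r(x), {{ C^r(y) | y in N(x) }}) *)
Definition refine_step (V : finType) (e : rel V) (c : V -> color) : V -> color :=
  fun x => GenTree.Node 0 [:: c x; GenTree.Node 0 (mset_of (map c (filter (e x) (enum V))))].

Definition refine_iter (V : finType) (e : rel V) (col : V -> nat) (r : nat) : V -> color :=
  iter r (refine_step e) (fun x => GenTree.Leaf (col x)).

Definition WL1 (V : finType) (e : rel V) (col : V -> nat) : seq color :=
  mset_of (map (refine_iter e col #|V|) (enum V)).

Definition col_default : nat := 0.
Definition col_port : nat := 1.
Definition col_special : nat := 2.

Definition port_indiv (V : finType) (p x : V) : V -> nat :=
  fun v => if v == x then col_special else if v == p then col_port else col_default.

Definition indiv (V : finType) (x : V) : V -> nat :=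
  fun v => if v == x then col_special else col_default.

(* ---------- The construction G(A',B') ----------
   Vertex set (TA + TB) + bool: inl (inl a) = vertex of A, inl (inr b) =
   vertex of B, inr true = connecting vertex c1, inr false = pendant vertex. *)
Definition glue_adj (TA TB : finType) (eA : rel TA) (eB : rel TB) (a1 : TA) (b1 : TB)
  (u v : (TA + TB) + bool) : bool :=
  match u, v with
  | inl (inl a), inl (inl a') => eA a a'
  | inl (inr b), inl (inr b') => eB b b'
  | inl (inl a), inr true => a == a1
  | inr true, inl (inl a) => a == a1
  | inl (inr b), inr true => b == b1
  | inr true, inl (inr b) => b == b1
  | inr true, inr false => true
  | inr false, inr true => true
  | _, _ => false
  end.

Definition part_WL1 (TA TB : finType) (eA : rel TA) (eB : rel TB) (a1 : TA) (b1 : TB)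
  (c : TA + TB) : seq color :=
  match c with
  | inl a => WL1 eA (port_indiv a1 a)
  | inr b => WL1 eB (port_indiv b1 b)
  end.

(* Main.v *)
Require Import Defs.
From mathcomp Require Import all_boot zify.
Set Implicit Arguments. Unset Strict Implicit. Unset Printing Implicit Defensive.

Lemma card_count (T : finType) (P : pred T) : #|[set x | P x]| = count P (enum T).
Proof. rewrite cardsE cardE /enum_mem size_filter -enumT.
by rewrite (@eq_filter _ _ predT) ?filter_predT.
Qed.

Lemma color_le_total : total color_le.
Proof. by move=> a b; rewrite /color_le leq_total. Qed.
Lemma color_le_trans : transitive color_le.
Proof. by move=> a b c; rewrite /color_le; apply: leq_trans. Qed.
Lemma color_le_anti : antisymmetric color_le.
Proof. by move=> a b; rewrite /color_le -eqn_leq => /eqP /(pcan_inj pickleK). Qed.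

Lemma perm_mset (s t : seq color) : perm_eq s t -> mset_of s = mset_of t.
Proof. by move/(perm_sortP color_le_total color_le_trans color_le_anti). Qed.
Lemma mset_perm (s t : seq color) : mset_of s = mset_of t -> perm_eq s t.
Proof. by move/(perm_sortP color_le_total color_le_trans color_le_anti). Qed.
Lemma perm_mset_of (s : seq color) : perm_eq (mset_of s) s.
Proof. by rewrite /mset_of perm_sort. Qed.

Definition prevc (t : color) : color :=
  match t with GenTree.Node _ (a :: _) => a | _ => t end.
Definition nbrsc (t : color) : seq color :=
  match t with GenTree.Node _ [:: _; GenTree.Node _ l] => l | _ => [::] end.
Fixpoint labc (t : color) : nat :=
  match t with GenTree.Leaf k => k | GenTree.Node _ (a :: _) => labc a | _ => 0 end.
Definition isC1 (t : color) : bool :=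
  (size (nbrsc t) == 3) && has (fun u => size (nbrsc u) == 1) (nbrsc t).
Fixpoint Phi (r : nat) (t : color) : color :=
  match r with
  | 0 => GenTree.Leaf (if labc t == 2 then 2 else if has isC1 (nbrsc t) then 1 else 0)
  | r'.+1 => GenTree.Node 0 [:: Phi r' (prevc t);
       GenTree.Node 0 (mset_of (map (Phi r') (filter (predC isC1) (nbrsc t))))]
  end.

Lemma iterS_eq (V : finType) (e : rel V) col s v :
  refine_iter e col s.+1 v = GenTree.Node 0 [:: refine_iter e col s v;
     GenTree.Node 0 (mset_of (map (refine_iter e col s) (filter (e v) (enum V))))].
Proof. by []. Qed.

Lemma labc_iter (V : finType) (e : rel V) col s v : labc (refine_iter e col s v) = col v.
Proof. by elim: s v => [|s IH] v //; rewrite iterS_eq /= IH. Qed.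

Lemma refine_iter_ext (V : finType) (e : rel V) col1 col2 :
  col1 =1 col2 -> forall s, refine_iter e col1 s =1 refine_iter e col2 s.
Proof.
move=> H; elim=> [|s IH] v; first by rewrite /refine_iter /= H.
by rewrite !iterS_eq IH (eq_map IH).
Qed.

Definition deg (V : finType) (e : rel V) v := count (e v) (enum V).

Lemma size_nbrs (V : finType) (e : rel V) col s v :
  size (nbrsc (refine_iter e col s.+1 v)) = deg e v.
Proof. by rewrite iterS_eq /= /mset_of size_sort size_map size_filter. Qed.

Lemma isC1_iter (V : finType) (e : rel V) col s v :
  isC1 (refine_iter e col s.+2 v) =
  (deg e v == 3) && has (fun w => deg e w == 1) (filter (e v) (enum V)).
Proof.
rewrite /isC1 size_nbrs; congr (_ && _).
rewrite iterS_eq /= /mset_of (perm_has _ (perm_mset_of _)) has_map.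
by apply: eq_has => w /=; rewrite size_nbrs.
Qed.

Lemma in_enumT (T : finType) (x : T) : x \in enum T.
Proof. by rewrite mem_enum. Qed.

Lemma Phi_iterS (V : finType) (e : rel V) col r s v :
  Phi r.+1 (refine_iter e col s.+1 v) = GenTree.Node 0 [:: Phi r (refine_iter e col s v);
    GenTree.Node 0 (mset_of (map (Phi r) (filter (predC isC1)
      (mset_of (map (refine_iter e col s) (filter (e v) (enum V)))))))].
Proof. by []. Qed.

Lemma part_phi (V : finType) (e : rel V) (col : V -> nat) (P : finType) (eP : rel P)
  (f : P -> V) (p1 : P) (c : V) :
  injective f ->
  (forall u u', e (f u) (f u') = eP u u') ->
  (forall u, e (f u) c = (u == p1)) ->
  (forall u w, e (f u) w -> w != c -> exists u', w = f u') ->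
  (forall u, f u != c) ->
  (forall s w, isC1 (refine_iter e col s.+2 w) = (w == c)) ->
  forall r s u, r + 3 <= s ->
  Phi r (refine_iter e col s (f u)) =
  refine_iter eP (fun u => if col (f u) == 2 then 2 else if u == p1 then 1 else 0) r u.
Proof.
move=> finj hPP hPc hPo hfc hC1.
elim=> [|r IH] [|s] u // hs.
- rewrite /= labc_iter (perm_has _ (perm_mset_of _)) has_map.
  case: s hs => [|[|s]] // _.
  rewrite (@eq_has _ _ (pred1 c)); last by move=> w /=; rewrite hC1.
  by rewrite has_pred1 mem_filter in_enumT andbT hPc.
- have hs' : r + 3 <= s by rewrite addSn ltnS in hs.
  rewrite Phi_iterS iterS_eq IH //.
  congr (GenTree.Node 0 [:: _; GenTree.Node 0 _]).
  apply: perm_mset.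
  apply: (perm_trans (perm_map _ (perm_filter _ (perm_mset_of _)))).
  rewrite filter_map -map_comp.
  have -> : [seq x <- [seq x <- enum V | e (f u) x] | preim (refine_iter e col s) (predC isC1) x]
     = [seq x <- [seq x <- enum V | e (f u) x] | x != c].
    apply: eq_filter => w /=.
    by case: (s) hs' => [|[|s']]; rewrite ?addnS // => _; rewrite hC1.
  have -> : [seq refine_iter eP (fun u0 : P => if col (f u0) == 2 then 2 else if u0 == p1 then 1 else 0) r x
     | x <- [seq x <- enum P | eP u x]] =
     [seq (Phi r \o refine_iter e col s) x | x <- [seq f x | x <- [seq x <- enum P | eP u x]]].
    by rewrite -map_comp; apply: eq_map => u' /=; rewrite IH.
  apply: perm_map; apply: uniq_perm.
  + by do 2 apply: filter_uniq; apply: enum_uniq.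
  + by rewrite map_inj_uniq //; apply: filter_uniq; apply: enum_uniq.
  move=> w; rewrite mem_filter (mem_filter (e (f u))) in_enumT andbT.
  apply/idP/idP.
  + case/andP=> wc euw; have [u' wE] := hPo _ _ euw wc; subst w.
    by rewrite mem_map // (mem_filter (eP u)) in_enumT andbT -hPP.
  + case/mapP=> u'; rewrite (mem_filter (eP u)) in_enumT andbT => eu ->.
    by rewrite hfc hPP.
Qed.

Definition glist (TA TB : finType) : seq ((TA + TB)%type + bool)%type :=
  [seq inl (inl a) | a <- enum TA] ++ [seq inl (inr b) | b <- enum TB] ++ [:: inr true; inr false].

Lemma glist_perm (TA TB : finType) : perm_eq (enum {: ((TA + TB) + bool)%type}) (glist TA TB).
Proof.
apply: uniq_perm; first exact: enum_uniq.
- rewrite /glist cat_uniq map_inj_uniq ?enum_uniq; last by move=> x y [].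
  rewrite cat_uniq map_inj_uniq ?enum_uniq; last by move=> x y [].
  rewrite /= andbT.
  apply/andP; split.
  + apply/hasPn => w; rewrite mem_cat => /orP [/mapP [x _ ->]|]; last by rewrite !inE => /orP [] /eqP ->; apply/mapP => [[x _]].
    by apply/mapP => [[y _]].
  + by rewrite orbF; apply/norP; split; apply/mapP => [[x _]].
- move=> w; rewrite in_enumT /glist !mem_cat.
  case: w => [[a|b]|[]]; rewrite ?inE ?eqxx ?orbT //.
  + by symmetry; apply/orP; left; apply/mapP; exists a; rewrite ?in_enumT.
  + by symmetry; apply/orP; right; apply/orP; left; apply/mapP; exists b; rewrite ?in_enumT.
Qed.

Lemma count_glist (TA TB : finType) (p : pred ((TA + TB)%type + bool)%type) :
  count p (enum {: ((TA + TB) + bool)%type}) =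
  count (fun a => p (inl (inl a))) (enum TA) + count (fun b => p (inl (inr b))) (enum TB)
  + p (inr true) + p (inr false).
Proof.
rewrite (permP (glist_perm TA TB)) /glist !count_cat !count_map /=.
by rewrite addn0 !addnA.
Qed.

Lemma glue_deg (TA TB : finType) (eA : rel TA) (eB : rel TB) (a1 : TA) (b1 : TB) d :
  (forall a, count (eA a) (enum TA) = d) -> (forall b, count (eB b) (enum TB) = d) ->
  forall w, deg (glue_adj eA eB a1 b1) w =
    match w with
    | inl (inl a) => d + (a == a1)
    | inl (inr b) => d + (b == b1)
    | inr true => 3
    | inr false => 1
    end.
Proof.
move=> hA hB w; rewrite /deg count_glist.
have c0 : forall (T : Type) (s : seq T), count xpred0 s = 0 by move=> T; elim.
case: w => [[a|b]|[]] /=; rewrite ?c0.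
- by rewrite -(hA a) addn0 addn0.
- by rewrite -(hB b) addn0 add0n.
- rewrite (eq_count (a2 := pred1 a1)) // (eq_count (a2 := pred1 b1)) //.
  by rewrite !count_uniq_mem ?enum_uniq ?in_enumT.
- by [].
Qed.


Lemma glue_isC1 (TA TB : finType) (eA : rel TA) (eB : rel TB) (a1 : TA) (b1 : TB) d :
  (forall a, count (eA a) (enum TA) = d) -> (forall b, count (eB b) (enum TB) = d) ->
  forall col s w, isC1 (refine_iter (glue_adj eA eB a1 b1) col s.+2 w) = (w == inr true).
Proof.
move=> hA hB col s w; have hd := glue_deg a1 b1 hA hB.
rewrite isC1_iter hd.
case: w => [[a|b]|[]].
- case: eqP => h3 //=; apply/negbTE/hasPn => w'; rewrite mem_filter => /andP [hw _].
  rewrite hd; case: w' hw => [[a'|b']|[]] //= _.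
  by move: h3; case: (a == a1); case: (a' == a1) => /= h; apply/eqP; lia.
- case: eqP => h3 //=; apply/negbTE/hasPn => w'; rewrite mem_filter => /andP [hw _].
  rewrite hd; case: w' hw => [[a'|b']|[]] //= _.
  by move: h3; case: (b == b1); case: (b' == b1) => /= h; apply/eqP; lia.
- rewrite eqxx /=; apply/hasP; exists (inr false); last by rewrite hd.
  by rewrite mem_filter in_enumT.
- by [].
Qed.

Definition loc_col (P V : finType) (f : P -> V) (col : V -> nat) (p1 : P) :=
  fun u => if col (f u) == 2 then 2 else if u == p1 then 1 else 0.

Lemma glue_mset (TA TB : finType) (eA : rel TA) (eB : rel TB) (a1 : TA) (b1 : TB) d
  (col : ((TA + TB)%type + bool)%type -> nat) n R :
  (forall a, count (eA a) (enum TA) = d) -> (forall b, count (eB b) (enum TB) = d) ->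
  col (inr false) = 0 -> n + 3 <= R ->
  perm_eq (map (Phi n) (filter (predC isC1)
             (map (refine_iter (glue_adj eA eB a1 b1) col R) (enum {: ((TA + TB) + bool)%type}))))
    (map (refine_iter eA (loc_col (fun a => inl (inl a)) col a1) n) (enum TA) ++
     map (refine_iter eB (loc_col (fun b => inl (inr b)) col b1) n) (enum TB) ++
     [:: refine_iter (fun _ _ : unit => false) (fun _ => 1) n tt]).
Proof.
move=> hA hB hcol hR.
set G := glue_adj eA eB a1 b1.
have hC1 := glue_isC1 a1 b1 hA hB col.
have R2 : exists R', R = R'.+2 by case: R hR => [|[|R']]; rewrite ?addnS //; exists R'.
case: R2 => R' eR.
rewrite filter_map -map_comp.
rewrite (eq_filter (a2 := fun w => w != inr true)); last first.
  by move=> w /=; rewrite eR hC1.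
apply: (perm_trans (perm_map _ (perm_filter _ (glist_perm TA TB)))).
have pmx : forall (T U : eqType) (f g : T -> U) s, f =1 g -> perm_eq (map f s) (map g s).
  by move=> T U f g s h; rewrite (eq_map h) perm_refl.
have fid : forall (T U : Type) (f : T -> U) (p : pred U) s,
    (forall x, p (f x)) -> filter p (map f s) = map f s.
  by move=> T U f p; elim=> //= x s IH h; rewrite h IH.
rewrite /glist !filter_cat !fid // [filter _ [:: _; _]]/= !map_cat -!map_comp.
apply: perm_cat; last apply: perm_cat.
- apply: pmx => a /=; apply: (@part_phi _ G col TA eA (fun a => inl (inl a)) a1 (inr true)) => //.
  + by move=> x y [].
  + by move=> u [[u'|u']|[]] //= _ _; exists u'.
- apply: pmx => b /=; apply: (@part_phi _ G col TB eB (fun b => inl (inr b)) b1 (inr true)) => //.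
  + by move=> x y [].
  + by move=> u [[u'|u']|[]] //= _ _; exists u'.
- have hP : Phi n (refine_iter G col R (inr false)) =
             refine_iter (fun _ _ : unit => false) (fun _ => 1) n tt.
    rewrite (@part_phi _ G col unit (fun _ _ => false) (fun _ => inr false) tt (inr true) _ _ _ _ _ _ n R tt) //.
    + by apply: refine_iter_ext => u; rewrite hcol.
    + by move=> [] [].
    + by move=> [] [[u'|u']|[]].
  by rewrite /= hP perm_refl.
Qed.

Definition Lsrg (d lam mu k : nat) : seq nat :=
  if k == 0 then nseq d 1
  else if k == 1 then 0 :: nseq lam 1 ++ nseq (d - 1 - lam) 2
  else nseq mu 1 ++ nseq (d - mu) 2.

Fixpoint Fsrg (d lam mu r k : nat) : color :=
  match r with
  | 0 => GenTree.Leaf (if k == 0 then 1 else 0)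
  | r'.+1 => GenTree.Node 0 [:: Fsrg d lam mu r' k;
              GenTree.Node 0 (mset_of (map (Fsrg d lam mu r') (Lsrg d lam mu k)))]
  end.

Lemma perm_count_mem (s t : seq nat) :
  (forall k, count_mem k s = count_mem k t) -> perm_eq s t.
Proof. by move=> h; apply/allP => x _; rewrite /= h. Qed.

Lemma count_split3 (T : eqType) (a : pred T) (cls : T -> nat) (s : seq T) :
  (forall w, cls w <= 2) ->
  count a s = count (fun w => a w && (cls w == 0)) s + count (fun w => a w && (cls w == 1)) s
              + count (fun w => a w && (cls w == 2)) s.
Proof.
move=> hc; elim: s => //= w s ->.
have := hc w; case: (a w) => /=; last by rewrite !add0n.
case: (cls w) => [|[|[|k]]] //= _; lia.
Qed.

Lemma count_nseq_mem (k x m : nat) : count_mem k (nseq m x) = (x == k) * m.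
Proof. by rewrite count_nseq. Qed.

Lemma count_pred1_and (T : finType) (p : T) (b : bool) (P : pred T) :
  (forall w, P w = (w == p) && b) -> count P (enum T) = b.
Proof.
move=> h; rewrite (eq_count h); clear h; case: b.
- rewrite (eq_count (a2 := pred1 p)); last by move=> w; rewrite andbT.
  by rewrite count_uniq_mem ?enum_uniq ?in_enumT.
- rewrite (eq_count (a2 := pred0)); last by move=> w; rewrite andbF.
  by elim: (enum T).
Qed.

Definition clsp (T : finType) (e : rel T) (p : T) (v : T) : nat :=
  if v == p then 0 else if e p v then 1 else 2.

Lemma srg_nbr_counts (T : finType) (e : rel T) n d lam mu p :
  simple_graph e -> strongly_regular e n d lam mu ->
  forall v, perm_eq (map (clsp e p) (filter (e v) (enum T))) (Lsrg d lam mu (clsp e p v)).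
Proof.
move=> [hsym hirr] [_ hdeg hlam hmu] v.
have hc : forall w, clsp e p w <= 2 by move=> w; rewrite /clsp; case: ifP => _ //; case: ifP.
pose N k := count (fun w => e v w && (clsp e p w == k)) (enum T).
have hsplit : d = N 0 + N 1 + N 2.
  by rewrite -(hdeg v) card_count (count_split3 _ _ hc).
have hN0 : N 0 = e v p.
  apply: (@count_pred1_and _ p) => w; rewrite /clsp.
  case: (w =P p) => [->|/eqP wp]; rewrite ?eqxx ?andbT ?(negbTE wp) //; by case: (e p w); rewrite andbF.
have hN1 : N 1 = count (fun w => e v w && e p w) (enum T).
  apply: eq_count => w; rewrite /clsp.
  case: (w =P p) => [->|_]; rewrite ?eqxx ?hirr ?andbF //; by case: (e p w); rewrite ?andbT ?andbF.
have hNk : forall k, N k.+3 = 0.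
  move=> k; rewrite /N (eq_count (a2 := pred0)); first by elim: (enum T).
  by move=> w /=; have := hc w; case: (clsp e p w) => [|[|[|j]]]; rewrite ?andbF.
apply: perm_count_mem => k.
rewrite count_map count_filter.
have -> : count (predI (preim (clsp e p) (pred1 k)) (e v)) (enum T) = N k.
  by apply: eq_count => w /=; rewrite andbC.
rewrite /clsp /Lsrg.
case: (v =P p) => [vp|vnp].
- subst v; rewrite /= count_nseq_mem.
  have h1 : N 1 = d by rewrite hN1 -(hdeg p) card_count; apply: eq_count => w; rewrite andbb.
  have h0 : N 0 = 0 by rewrite hN0 hirr.
  case: k => [|[|[|k]]] //=; rewrite ?muln0 ?mul1n ?mul0n //. lia.
- case epv: (e p v) => /=.
  + rewrite count_cat !count_nseq_mem.
    have h0 : N 0 = 1 by rewrite hN0 hsym epv.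
    have h1 : N 1 = lam.
      rewrite hN1 -(hlam v p); last by rewrite hsym.
      by rewrite card_count.
    case: k => [|[|[|k]]] //=; rewrite ?muln0 ?mul1n ?mul0n ?addn0 ?add0n //. lia.
  + rewrite count_cat !count_nseq_mem.
    have h0 : N 0 = 0 by rewrite hN0 hsym epv.
    have h1 : N 1 = mu.
      rewrite hN1 -(hmu v p); last by rewrite hsym epv.
        by rewrite card_count.
      by apply/eqP.
    case: k => [|[|[|k]]] //=; rewrite ?muln0 ?mul1n ?mul0n ?addn0 ?add0n //. lia.
Qed.

Lemma srg_refine (T : finType) (e : rel T) n d lam mu p :
  simple_graph e -> strongly_regular e n d lam mu ->
  forall r v, refine_iter e (fun v => if v == p then 1 else 0) r v = Fsrg d lam mu r (clsp e p v).
Proof.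
move=> hs hsr; elim=> [|r IH] v.
- rewrite /refine_iter /= /clsp.
  by case: (v =P p) => _ //; case: (e p v).
- rewrite iterS_eq /= IH; congr (GenTree.Node 0 [:: _; GenTree.Node 0 _]).
  apply: perm_mset; rewrite (eq_map IH) map_comp; apply: perm_map.
  exact: (srg_nbr_counts p hs hsr).
Qed.

Lemma srg_all (T : finType) (e : rel T) n d lam mu p :
  simple_graph e -> strongly_regular e n d lam mu ->
  forall r, perm_eq (map (refine_iter e (fun v => if v == p then 1 else 0) r) (enum T))
    (map (Fsrg d lam mu r) (nseq 1 0 ++ nseq d 1 ++ nseq (n - 1 - d) 2)).
Proof.
move=> hs hsr r; have [hsym hirr] := hs; have [hn hdeg _ _] := hsr.
rewrite (eq_map (srg_refine p hs hsr r)) map_comp; apply: perm_map.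
have hc : forall w, clsp e p w <= 2 by move=> w; rewrite /clsp; case: ifP => _ //; case: ifP.
pose N k := count (fun w => predT w && (clsp e p w == k)) (enum T).
have hsplit : n = N 0 + N 1 + N 2.
  by rewrite -hn cardT -count_predT (count_split3 _ _ hc).
have h0 : N 0 = 1.
  rewrite /N (eq_count (a2 := pred1 p)); first by rewrite count_uniq_mem ?enum_uniq ?in_enumT.
  move=> w /=; rewrite /clsp; case: ifP => wp //; by case: ifP.
have h1 : N 1 = d.
  rewrite -(hdeg p) card_count /N; apply: eq_count => w /=; rewrite /clsp.
  by case: (w =P p) => [->|_]; rewrite ?hirr //; case: (e p w).
apply: perm_count_mem => k.
rewrite count_map.
have -> : count (preim (clsp e p) (pred1 k)) (enum T) = N k by [].
rewrite !count_cat !count_nseq_mem.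
case: k => [|[|[|k]]] //=; rewrite ?muln0 ?mul1n ?mul0n ?addn0 ?add0n //; try lia.
rewrite /N (eq_count (a2 := pred0)); first by elim: (enum T).
by move=> w /=; have := hc w; case: (clsp e p w) => [|[|[|j]]].
Qed.

Lemma cancel_mid (X Y O1 O2 Z : seq color) (P : color) :
  perm_eq O1 Z -> perm_eq O2 Z ->
  perm_eq (X ++ O1 ++ [:: P]) (Y ++ O2 ++ [:: P]) -> perm_eq X Y.
Proof.
move=> h1 h2 h; rewrite -(perm_cat2r (O1 ++ [:: P])).
apply: (perm_trans h); rewrite perm_cat2l perm_cat2r.
by apply: (perm_trans h2); rewrite perm_sym.
Qed.

Lemma deg_count (T : finType) (e : rel T) n d lam mu :
  strongly_regular e n d lam mu -> forall a, count (e a) (enum T) = d.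
Proof. by case=> _ h _ _ a; rewrite -(h a) card_count. Qed.

Lemma glue_WL1_perm (TA TB : finType) (eA : rel TA) (eB : rel TB) (a1 : TA) (b1 : TB)
   n d lam mu (x : TA + TB) :
  strongly_regular eA n d lam mu -> strongly_regular eB n d lam mu -> 0 < n ->
  perm_eq (map (Phi n) (filter (predC isC1) (WL1 (glue_adj eA eB a1 b1) (indiv (inl x)))))
    (map (refine_iter eA (loc_col (fun a => (inl (inl a) : ((TA + TB) + bool)%type)) (indiv (inl x)) a1) n) (enum TA) ++
     map (refine_iter eB (loc_col (fun b => (inl (inr b) : ((TA + TB) + bool)%type)) (indiv (inl x)) b1) n) (enum TB) ++
     [:: refine_iter (fun _ _ : unit => false) (fun _ => 1) n tt]).
Proof.
move=> hA hB n0.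
have [hnA _ _ _] := hA; have [hnB _ _ _] := hB.
apply: perm_trans; last apply: (glue_mset a1 b1 (deg_count hA) (deg_count hB) (col := indiv (inl x)) (R := #|{: ((TA + TB) + bool)%type}|)) => //.
  by apply: perm_map; apply: perm_filter; exact: perm_mset_of.
by rewrite card_sum card_sum card_bool hnA hnB; lia.
Qed.

Lemma loc_in_A (TA TB : finType) (a1 a : TA) :
  loc_col (fun a' => (inl (inl a') : ((TA + TB) + bool)%type)) (indiv (inl (inl a))) a1 =1 port_indiv a1 a.
Proof.
move=> u; rewrite /loc_col /indiv /port_indiv /=.
case: (@eqP _ (inl (inl u) : ((TA + TB) + bool)%type) (inl (inl a))) => [[->]|h]; first by rewrite eqxx.
by case: (u =P a) h => [-> []|_ _].
Qed.
Lemma loc_out_A (TA TB : finType) (a1 : TA) (b : TB) :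
  loc_col (fun a' => (inl (inl a') : ((TA + TB) + bool)%type)) (indiv (inl (inr b))) a1 =1
  (fun v => if v == a1 then 1 else 0).
Proof. by move=> u; rewrite /loc_col /indiv /=. Qed.
Lemma loc_in_B (TA TB : finType) (b1 b : TB) :
  loc_col (fun b' => (inl (inr b') : ((TA + TB) + bool)%type)) (indiv (inl (inr b))) b1 =1 port_indiv b1 b.
Proof.
move=> u; rewrite /loc_col /indiv /port_indiv /=.
case: (@eqP _ (inl (inr u) : ((TA + TB) + bool)%type) (inl (inr b))) => [[->]|h]; first by rewrite eqxx.
by case: (u =P b) h => [-> []|_ _].
Qed.
Lemma loc_out_B (TA TB : finType) (b1 : TB) (a : TA) :
  loc_col (fun b' => (inl (inr b') : ((TA + TB) + bool)%type)) (indiv (inl (inl a))) b1 =1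
  (fun v => if v == b1 then 1 else 0).
Proof. by move=> u; rewrite /loc_col /indiv /=. Qed.

Theorem claim1 (TA TB : finType) (eA : rel TA) (eB : rel TB)
  (n d lam mu : nat) (a1 : TA) (b1 : TB) :
  simple_graph eA -> simple_graph eB ->
  strongly_regular eA n d lam mu -> strongly_regular eB n d lam mu ->
  forall (c : TA + TB) (c' : TA + TA),
    part_WL1 eA eB a1 b1 c != part_WL1 eA eA a1 a1 c' ->
    WL1 (glue_adj eA eB a1 b1) (indiv (inl c))
      != WL1 (glue_adj eA eA a1 a1) (indiv (inl c')).
Proof.
move=> sA sB hA hB c c' hne; apply/negP => /eqP hW; move/negP: hne; apply; apply/eqP.
have [hnA _ _ _] := hA; have [hnB _ _ _] := hB.
have n0 : 0 < n.
  by case: c {hW} => [a|b]; [rewrite -hnA | rewrite -hnB]; apply/card_gt0P; [exists a | exists b].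
have hG := glue_WL1_perm a1 b1 c hA hB n0.
have hH := glue_WL1_perm a1 a1 c' hA hA n0.
rewrite hW perm_sym in hG; have hb := perm_trans hG hH; clear hG hH hW.
have OA := srg_all a1 sA hA n; have OB := srg_all b1 sB hB n.
case: c hb => [a|b] hb; case: c' hb => [a'|a'] hb; rewrite /part_WL1 /WL1 ?hnA ?hnB;
  apply: perm_mset.
- rewrite (eq_map (refine_iter_ext _ (@loc_in_A _ _ _ _) n)) in hb.
  rewrite (eq_map (refine_iter_ext _ (@loc_out_B _ _ _ _) n)) in hb.
  rewrite (eq_map (refine_iter_ext _ (@loc_in_A _ _ _ _) n)) in hb.
  rewrite (eq_map (refine_iter_ext _ (@loc_out_B _ _ _ _) n)) in hb.
  exact: cancel_mid OB OA hb.
- rewrite (eq_map (refine_iter_ext _ (@loc_in_A _ _ _ _) n)) in hb.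
  rewrite (eq_map (refine_iter_ext _ (@loc_out_B _ _ _ _) n)) in hb.
  rewrite (eq_map (refine_iter_ext _ (@loc_out_A _ _ _ _) n)) in hb.
  rewrite (eq_map (refine_iter_ext _ (@loc_in_B _ _ _ _) n)) in hb.
  rewrite perm_sym perm_catCA perm_sym in hb.
  exact: cancel_mid OB OA hb.
- rewrite (eq_map (refine_iter_ext _ (@loc_out_A _ _ _ _) n)) in hb.
  rewrite (eq_map (refine_iter_ext _ (@loc_in_B _ _ _ _) n)) in hb.
  rewrite (eq_map (refine_iter_ext _ (@loc_in_A _ _ _ _) n)) in hb.
  rewrite perm_catCA in hb.
  exact (cancel_mid OA OA hb).
- rewrite (eq_map (refine_iter_ext _ (@loc_out_A _ _ _ _) n)) in hb.
  rewrite (eq_map (refine_iter_ext _ (@loc_in_B _ _ _ _) n)) in hb.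
  rewrite (eq_map (refine_iter_ext _ (@loc_in_B _ _ _ _) n)) in hb.
  rewrite perm_catCA perm_sym perm_catCA perm_sym in hb.
  exact (cancel_mid OA OA hb).
Qed.
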